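(* For $d\ge1$ and $k\in\{-1,1\}$ let $\overline B(d,k;\lambda,z)=\prod_{m=1}^dB((-1)^{m+1}k;\lambda,z)$ (matrix product, factors ordered from $m=1$ on the left). Then for all $1\le i,j\le N$, $\lambda\in[0,1]$, $z\in(0,1]$, $$[\overline B(d,k;\lambda,z)]_{i,j}=\sum_{w\in\mathbb F_{i,j}^{(k)}(d)}z^{|w|_{\mathcal K}}\,\mathcal R(e_i,w;\lambda).$$
   Context: Fix an integer $N\ge 3$. Let $\mathcal G_N$ be the groupoid with object set $\{1,\dots,N\}$ generated by arrows $A_{i,j}^{(k)}$, $i\neq j\in\{1,\dots,N\}$, $k\in\{-1,1\}$, with source $i$ and target $j$, subject to the relations $A_{i,j}^{(k)}A_{j,\ell}^{(k)}=A_{i,\ell}^{(k)}$ for all $i,j,\ell$, $k$, with the convention $A_{i,i}^{(k)}:=e_i$ (unit at object $i$). Let $\mathcal A$ be its arrow set and $\mathcal A_i$ the arrows with source $i$. Every arrow has a unique reduced representation: either empty or $A_{i_1,i_2}^{(k)}A_{i_2,i_3}^{(-k)}\cdots A_{i_d,i_{d+1}}^{((-1)^{d+1}k)}$ with $d\ge1$, $i_\ell\ne i_{\ell+1}$; $|w|$ denotes its number $d$ of generators. A metric $|\cdot|_{\mathcal K}$ is given by values $|A_{i,j}^{(k)}|_{\mathcal K}\ge0$ on generators, $|e_i|_{\mathcal K}=0$, and $|w|_{\mathcal K}$ the sum of the values of the generators in the reduced representation of $w$. Let $\mathbb F_{i,j}^{(k)}(d)$ be the set of $w\in\mathcal A_i$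 with $|w|=d$, target $j$, and whose reduced representation has first generator with upper index $k$. Let $\{W_n\}_{n\ge0}$ be the Markov chain on $\mathcal A$ with $P(W_{n+1}=y\mid W_n=x)=p_{i,j}^{(k)}$ if $x^{-1}y=A_{i,j}^{(k)}$ with $i\ne j$ and $0$ otherwise, where $p_{i,j}^{(k)}\in(0,1)$ and $\sum_{j\ne i}\sum_{k=\pm1}p_{i,j}^{(k)}=1$ for each $i$; $P_x,E_x$ denote law and expectation with $W_0=x$. Let $\mathcal R(e_i,w;\lambda)=\sum_{n\ge0}P_{e_i}(\inf\{m\ge0:W_m=w\}=n)\lambda^n$. For $x\in\mathcal A$ let $T(0,x)=\inf\{n\ge0:W_n=W_0x\}$ and $R_{i,j}^{(k)}(\lambda)=E_{e_i}[\lambda^{T(0,A_{i,j}^{(k)})}]$. Let $B(k;\lambda,z)$ be the $N\times N$ matrix with $[B(k;\lambda,z)]_{i,j}=(1-\delta_{i,j})z^{|A_{i,j}^{(k)}|_{\mathcal K}}R_{i,j}^{(k)}(\lambda)$. *)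

(* Defs.v *)
From HB Require Import structures.
From mathcomp Require Import all_boot all_order all_algebra.
From mathcomp Require Import all_classical all_reals all_analysis.
Set Implicit Arguments. Unset Strict Implicit. Unset Printing Implicit Defensive.
Import Order.TTheory GRing.Theory Num.Theory.
Local Open Scope ring_scope.

(* Upper indices k in {-1,1} are encoded by booleans: true <-> 1, false <-> -1.
   Objects {1,...,N} are encoded by 'I_N. *)

(* An arrow of the groupoid G_N, in its (unique) reduced representation:
   (i, k, [:: i_2; ...; i_{d+1}]) stands for
     A_{i,i_2}^{(k)} A_{i_2,i_3}^{(-k)} ... A_{i_d,i_{d+1}}^{((-1)^{d+1}k)}
   (source i, |w| = d), and (i, true, [::]) stands for the unit e_i. *)
Definition arrow (N : nat) := ('I_N * bool * seq 'I_N)%type.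

Section Groupoid.
Variable N : nat.

Definition a_src (w : arrow N) : 'I_N := w.1.1.
Definition a_sgn (w : arrow N) : bool := w.1.2.
Definition a_path (w : arrow N) : seq 'I_N := w.2.

Definition unit_arrow (i : 'I_N) : arrow N := (i, true, [::]).

Definition a_tgt (w : arrow N) : 'I_N := last (a_src w) (a_path w).

Definition a_len (w : arrow N) : nat := size (a_path w).

(* upper index of the m-th generator (m >= 1) when the first one has index k:
   (-1)^{m+1} k *)
Definition alt_sgn (k : bool) (m : nat) : bool := if odd m then k else ~~ k.

(* validity: consecutive objects distinct, and the unit normalised *)
Definition reduced (w : arrow N) : bool :=
  path (fun x y => x != y) (a_src w) (a_path w)
  && ((a_path w == [::]) ==> a_sgn w).

(* right multiplication of an arrow x by the generator A_{tgt x, b}^{(k)}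
   (with A_{a,a}^{(k)} = e_a), computed on reduced representations using the
   relations A_{a,c}^{(k)} A_{c,b}^{(k)} = A_{a,b}^{(k)}. *)
Definition mul_gen (x : arrow N) (b : 'I_N) (k : bool) : arrow N :=
  let i := a_src x in
  let s := a_path x in
  if b == a_tgt x then x else
  if s is [::] then (i, k, [:: b]) else
  let ls := alt_sgn (a_sgn x) (size s) in
  if k != ls then (i, a_sgn x, rcons s b) else
  let s' := take (size s).-1 s in
  if last i s' == b then
    (if s' is [::] then unit_arrow i else (i, a_sgn x, s'))
  else (i, a_sgn x, rcons s' b).

Definition a_metric {R : numDomainType} (K : 'I_N -> 'I_N -> bool -> R)
    (w : arrow N) : R :=
  \sum_(m < a_len w)
     K (nth (a_src w) (a_src w :: a_path w) m)
       (nth (a_src w) (a_path w) m) (alt_sgn (a_sgn w) m.+1).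

Definition inF (i j : 'I_N) (k : bool) (d : nat) (w : arrow N) : bool :=
  [&& a_src w == i, reduced w, a_len w == d, a_tgt w == j & a_sgn w == k].

End Groupoid.

Section Chain.
Variables (R : realType) (N : nat) (p : 'I_N -> 'I_N -> bool -> R).

(* one-step transition weight from x when the step is the generator
   A_{tgt x, b}^{(k)}: P(W_{n+1} = x A | W_n = x) = p_{tgt x, b}^{(k)}, b <> tgt x *)
Definition step_prob (x : arrow N) (st : 'I_N * bool) : R :=
  if st.1 != a_tgt x then p (a_tgt x) st.1 st.2 else 0.

Definition traj (x : arrow N) (st : seq ('I_N * bool)) : seq (arrow N) :=
  x :: scanl (fun y s => mul_gen y s.1 s.2) x st.

(* P_x( inf{m >= 0 : W_m = w} = n ), computed on the path space of length n:
   sum over all step sequences of the product of transition probabilities,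
   restricted to trajectories avoiding w at times 0..n-1 and at w at time n. *)
Definition first_passage (x w : arrow N) (n : nat) : R :=
  \sum_(st : n.-tuple ('I_N * bool))
    (\prod_(m < n) step_prob (nth x (traj x st) m) (tnth st m))
    * ((all (fun y => y != w) (take n (traj x st))
        && (last x (traj x st) == w))%:R).

Definition Rgf (x w : arrow N) (lam : R) : R :=
  limn (fun M => \sum_(0 <= n < M) first_passage x w n * lam ^+ n).

(* R_{i,j}^{(k)}(lambda) = E_{e_i}[lambda^{T(0, A_{i,j}^{(k)})}]
   = sum_n P_{e_i}(T(0,A_{i,j}^{(k)}) = n) lambda^n, where
   T(0,A) is the hitting time of W_0 A = A_{i,j}^{(k)} when W_0 = e_i. *)
Definition Rij (i j : 'I_N) (k : bool) (lam : R) : R :=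
  Rgf (unit_arrow i) (i, k, [:: j]) lam.

Definition Bmx (K : 'I_N -> 'I_N -> bool -> R) (k : bool) (lam z : R)
  : 'M[R]_N :=
  \matrix_(i, j) (if i != j then z `^ (K i j k) * Rij i j k lam else 0).

Definition Bbar (K : 'I_N -> 'I_N -> bool -> R) (d : nat) (k : bool)
    (lam z : R) : 'M[R]_N :=
  foldr (fun m acc => Bmx K (alt_sgn k m) lam z *m acc) 1%:M (iota 1 d).

End Chain.

(* Main.v *)
Require Import Defs.
From HB Require Import structures.
From mathcomp Require Import all_boot all_order all_algebra.
From mathcomp Require Import all_classical all_reals all_analysis.
Import Order.TTheory GRing.Theory Num.Theory.
Local Open Scope ring_scope.
Set Implicit Arguments. Unset Strict Implicit. Unset Printing Implicit Defensive.
Section Conv.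
Variable R : realType.

Lemma conv_sum (F G : nat -> R) (L : nat) :
  \sum_(n < L) \sum_(a < n.+1) F a * G (n - a)%N =
  \sum_(a < L) F a * \sum_(b < L - a) G b.
Proof.
elim: L => [|L IH]; first by rewrite !big_ord0.
rewrite big_ord_recr /= IH.
have -> : \sum_(a < L.+1) F a * \sum_(b < L.+1 - a) G b =
   \sum_(a < L.+1) F a * \sum_(b < L - a) G b + \sum_(a < L.+1) F a * G (L - a)%N.
  rewrite -big_split /=; apply: eq_bigr => a _.
  by rewrite -mulrDr subSn ?big_ord_recr // -ltnS.
rewrite big_ord_recr /= subnn; congr (_ + _); by rewrite big_ord_recr /= subnn big_ord0 mulr0 addr0.
Qed.
End Conv.
Section Conv2.
Variable R : realType.

Lemma psum_mono (H : nat -> R) (m n : nat) : (forall b, 0 <= H b) -> (m <= n)%N ->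
  \sum_(b < m) H b <= \sum_(b < n) H b.
Proof.
move=> H0 mn; rewrite -!(big_mkord xpredT) (big_cat_nat (leq0n m) mn) /=.
by rewrite lerDl sumr_ge0.
Qed.

Lemma psum_cvg (H : nat -> R) (B : R) : (forall b, 0 <= H b) ->
  (forall M, \sum_(0 <= n < M) H n <= B) ->
  nondecreasing_seq (fun M => \sum_(0 <= n < M) H n) /\
  cvgn (fun M => \sum_(0 <= n < M) H n).
Proof.
move=> H0 HB.
have nd : nondecreasing_seq (fun M => \sum_(0 <= n < M) H n).
  by move=> m n mn /=; rewrite !big_mkord psum_mono.
split => //; apply: nondecreasing_is_cvgn => //.
by exists B => _ [n _ <-].
Qed.

Lemma lim_conv (F G C : nat -> R) (B : R) :
  (forall n, 0 <= F n) -> (forall n, 0 <= G n) ->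
  (forall M, \sum_(0 <= n < M) F n <= B) ->
  (forall M, \sum_(0 <= n < M) G n <= B) ->
  (forall n, C n = \sum_(a < n.+1) F a * G (n - a)%N) ->
  limn (fun M => \sum_(0 <= n < M) C n) =
  limn (fun M => \sum_(0 <= n < M) F n) * limn (fun M => \sum_(0 <= n < M) G n).
Proof.
move=> F0 G0 FB GB hC.
have [ndF cF] := psum_cvg F0 FB.
have [ndG cG] := psum_cvg G0 GB.
have sFG0 : forall M, 0 <= \sum_(0 <= n < M) G n by move=> M; rewrite sumr_ge0.
have sF0 : forall M, 0 <= \sum_(0 <= n < M) F n by move=> M; rewrite sumr_ge0.
have sCe : forall M, \sum_(0 <= n < M) C n = \sum_(a < M) F a * \sum_(b < M - a) G b.
  by move=> M; rewrite big_mkord -conv_sum; apply: eq_bigr => n _; rewrite hC.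
have le1 : forall M, \sum_(0 <= n < M) C n <=
    (\sum_(0 <= n < M) F n) * (\sum_(0 <= n < M) G n).
  move=> M; rewrite sCe big_mkord big_distrl /=; apply: ler_sum => a _.
  by rewrite ler_wpM2l // big_mkord psum_mono // leq_subr.
have le2 : forall M, (\sum_(0 <= n < M) F n) * (\sum_(0 <= n < M) G n) <=
    \sum_(0 <= n < M + M) C n.
  move=> M; rewrite sCe big_mkord big_distrl /=.
  rewrite (le_trans _ (@psum_mono (fun a => F a * \sum_(b < M + M - a) G b) M (M + M) _ (leq_addr M M))) //; last first.
    by move=> b; rewrite mulr_ge0 // sumr_ge0.
  apply: ler_sum => a _; rewrite ler_wpM2l // big_mkord psum_mono //.
  by rewrite -addnBA ?leq_addr // ltnW.
have C0 : forall n, 0 <= C n by move=> n; rewrite hC sumr_ge0 // => a _; rewrite mulr_ge0.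
have [ndC cC] := psum_cvg C0 (fun M => le_trans (le1 M) (ler_pM (sF0 M) (sFG0 M) (FB M) (GB M))).
rewrite -limM //; apply/eqP; rewrite eq_le; apply/andP; split.
  apply: ler_lim => //; first exact: is_cvgM.
  by near=> M; exact: le1.
apply: limr_le; first exact: is_cvgM.
near=> M; apply: (le_trans (le2 M)); exact: nondecreasing_cvgn_le.
Unshelve. all: by end_near.
Qed.
End Conv2.
Lemma sum_tuple_cons (R : realType) (T : finType) (n : nat) (F : n.+1.-tuple T -> R) :
  \sum_(t : n.+1.-tuple T) F t = \sum_(x : T) \sum_(t : n.-tuple T) F [tuple of x :: t].
Proof.
rewrite pair_big /=.
rewrite (reindex (fun p : T * n.-tuple T => [tuple of p.1 :: p.2])) //=.
exists (fun t : n.+1.-tuple T => (thead t, [tuple of behead t])) => [[x t] _|t _] /=.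
  by congr (_, _); apply: val_inj.
by apply: val_inj; rewrite /= [in RHS](tuple_eta t).
Qed.

Lemma sum_tuple0 (R : realType) (T : finType) (F : 0.-tuple T -> R) :
  \sum_(t : 0.-tuple T) F t = F [tuple].
Proof.
rewrite (eq_bigr (fun _ => F [tuple])); last by move=> t _; rewrite (tuple0 t).
by rewrite sumr_const card_tuple expn0.
Qed.

Section Chain2.
Variables (R : realType) (N : nat) (p : 'I_N -> 'I_N -> bool -> R).

Fixpoint fpr (x w : arrow N) (n : nat) : R :=
  if n is n'.+1 then (x != w)%:R *
     \sum_(s : 'I_N * bool) step_prob p x s * fpr (mul_gen x s.1 s.2) w n'
  else (x == w)%:R.

Lemma size_traj (x : arrow N) (st : seq ('I_N * bool)) : size (traj x st) = (size st).+1.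
Proof. by rewrite /traj /= size_scanl. Qed.

Lemma traj_cons (x : arrow N) (s : 'I_N * bool) st : traj x (s :: st) = x :: traj (mul_gen x s.1 s.2) st.
Proof. by []. Qed.

Lemma fp_fpr (x w : arrow N) n : first_passage p x w n = fpr x w n.
Proof.
elim: n x => [|n IH] x.
  by rewrite /first_passage sum_tuple0 big_ord0 mul1r /=.
rewrite /first_passage; apply: eq_trans; first exact: sum_tuple_cons. rewrite /= big_distrr /=.
apply: eq_bigr => s _.
rewrite -IH /first_passage big_distrr /= big_distrr /=.
apply: eq_bigr => t _.
rewrite traj_cons big_ord_recl /=.
set y := mul_gen x s.1 s.2.
have -> : tnth [tuple of s :: t] ord0 = s by [].
have -> : \prod_(i < n) step_prob p (nth x (x :: traj y t) (lift ord0 i)) (tnth [tuple of s :: t] (lift ord0 i))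
   = \prod_(i < n) step_prob p (nth y (traj y t) i) (tnth t i).
  apply: eq_bigr => i _ /=.
  by rewrite add0n tnthS (set_nth_default y) ?size_traj ?size_tuple // ltnS ltnW.
case: (x != w) => /=; first by rewrite mul1r mulrA.
by rewrite !(mul0r, mulr0).
Qed.
End Chain2.
Ltac vstep := rewrite /= ?eqxx /=; try (first [match goal with
 | |- context [?a == ?b] => is_var a; is_var b; have [?|?] := eqVneq a b; try subst
 end | match goal with
 | |- context [?a == ?b] => have [?|?] := eqVneq a b; try subst
 end]).
Ltac vbrute := repeat progress vstep; try done;
 try (match goal with H : is_true (?a != ?a) |- _ => by rewrite eqxx in H end).

Section Grp.
Variable N : nat.

Lemma mul_gen_rcons (i0 : 'I_N) k0 s0 e b kk :
  mul_gen (i0, k0, rcons s0 e) b kk =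
  if b == e then (i0, k0, rcons s0 e) else
  if kk != alt_sgn k0 (size s0).+1 then (i0, k0, rcons (rcons s0 e) b) else
  if last i0 s0 == b then (if s0 is [::] then unit_arrow i0 else (i0, k0, s0))
  else (i0, k0, rcons s0 b).
Proof.
rewrite /mul_gen /a_tgt /a_path /a_src /a_sgn /= last_rcons size_rcons.
case: s0 => [|c s2] //=.
by rewrite -cats1 take_size_cat.
Qed.

Lemma mul_gen_nil (i0 : 'I_N) k0 b kk :
  mul_gen (i0, k0, [::]) b kk = if b == i0 then (i0, k0, [::]) else (i0, kk, [:: b]).
Proof. by []. Qed.

Lemma mul_gen_src (x : arrow N) b kk : a_src (mul_gen x b kk) = a_src x.
Proof.
case: x => [[i0 k0] s]; case/lastP: s => [|s0 e].
  by rewrite mul_gen_nil; case: ifP.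
rewrite mul_gen_rcons; case: ifP => // _; case: ifP => // _; case: ifP => // _.
by case: s0.
Qed.

Definition lmul (i l : 'I_N) (k : bool) (y : arrow N) : arrow N :=
  match a_path y with
  | [::] => (i, k, [:: l])
  | c :: s => if a_sgn y != k then (i, k, l :: c :: s)
              else if c == i then (if s is [::] then unit_arrow i else (i, ~~k, s))
              else (i, k, c :: s)
  end.

Lemma alt_sgnS kk m : alt_sgn kk m.+1 = alt_sgn (~~ kk) m.
Proof. by rewrite /alt_sgn /=; case: (odd m); case: kk. Qed.

Lemma lmul_tgt i l k (y : arrow N) : a_src y = l -> a_tgt (lmul i l k y) = a_tgt y.
Proof.
case: y => [[l0 k0] s]; rewrite /a_src /= => ->; case: s => [|c s]; rewrite /lmul /a_tgt /=; first by [].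
case: ifP => _ //; case: ifP => [/eqP ->|_] //; by case: s.
Qed.

Lemma lmul_mul i l k (y : arrow N) b kk : i != l -> a_src y = l ->
  lmul i l k (mul_gen y b kk) = mul_gen (lmul i l k y) b kk.
Proof.
move=> il; case: y => [[l0 k0] s]; rewrite /a_src /= => ->.
case: s => [|c s1].
  by case: k0; case: k; case: kk; rewrite /lmul /mul_gen /a_tgt /a_sgn /a_path /a_src /alt_sgn /unit_arrow /=; vbrute.
case/lastP: s1 => [|s4 e].
  by case: k0; case: k; case: kk; rewrite /lmul /mul_gen /a_tgt /a_sgn /a_path /a_src /alt_sgn /unit_arrow /=; vbrute.
case: s4 => [|c3 s5].
  by case: k0; case: k; case: kk; rewrite /lmul /mul_gen /a_tgt /a_sgn /a_path /a_src /alt_sgn /unit_arrow /=; vbrute.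
have -> : lmul i l k (l, k0, c :: rcons (c3 :: s5) e) =
  if k0 != k then (i, k, rcons [:: l, c, c3 & s5] e) else if c == i then (i, ~~k, rcons (c3 :: s5) e)
  else (i, k, rcons [:: c, c3 & s5] e) by [].
rewrite -[(l, k0, c :: rcons (c3 :: s5) e)]/((l, k0, rcons [:: c, c3 & s5] e)) mul_gen_rcons.
rewrite !(fun_if (fun x => mul_gen x b kk)) !mul_gen_rcons.
rewrite !(fun_if (lmul i l k)) /lmul /a_sgn /a_path /alt_sgn /unit_arrow /=.
rewrite ?negbK; move: (odd (size s5)) (last c3 s5) => o q.
by case: o; case: k0; case: k; case: kk => /=; vbrute.
Qed.
Definition pn (x : arrow N) := path (fun a b => a != b) (a_src x) (a_path x).

Lemma pn_mul (y : arrow N) b kk : pn y -> pn (mul_gen y b kk).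
Proof.
case: y => [[i0 k0] s]; rewrite /pn /a_src /a_path /=.
case/lastP: s => [|s0 e].
  by rewrite mul_gen_nil; case: ifP => //= /negbT; rewrite eq_sym => ->.
rewrite mul_gen_rcons rcons_path => /andP [h1 h2].
case: ifP => [_|/negbT be]; first by rewrite /= rcons_path h1 h2.
case: ifP => _; first by rewrite /= !rcons_path h1 h2 last_rcons eq_sym be.
case: ifP => [_|/negbT lb]; first by case: (s0) h1.
by rewrite /= rcons_path h1 lb.
Qed.

Lemma lmul_eqW i l k (y : arrow N) (t : seq 'I_N) : i != l -> a_src y = l -> pn y ->
  t != [::] -> (lmul i l k y == (i, k, l :: t)) = (y == (l, ~~k, t)).
Proof.
move=> il; case: y => [[l0 k0] s]; rewrite /pn /a_src /a_path /= => -> hp tn.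
apply/eqP/eqP => [|[-> ->]]; last by case: t tn => // c t _; rewrite /lmul /= /a_sgn /=; case: k.
case: s hp => [|c s1] /=.
  by rewrite /lmul /= => _ [E]; move: tn; rewrite -E.
rewrite /lmul /a_sgn /a_path /= => /andP [lc _].
case: ifP => [kk [<-]|/negbFE/eqP ->].
  by congr (_, _, _); move: kk; case: k0; case: k.
case: ifP => _; first by case: s1 => // c1 s1 [] /eqP; case: k.
by case=> E; move: lc; rewrite E eqxx.
Qed.

Definition beyond (i l : 'I_N) (k : bool) (x : arrow N) :=
  [&& a_src x == i, a_sgn x == k & (if a_path x is c :: _ :: _ then c == l else false)].

Lemma cut i l k (x : arrow N) b kk : ~~ beyond i l k x -> x != (i, k, [:: l]) ->
  ~~ beyond i l k (mul_gen x b kk).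
Proof.
case: x => [[i0 k0] s]; case/lastP: s => [|s0 e].
  by rewrite mul_gen_nil; case: ifP => _; rewrite /beyond /= !andbF.
rewrite mul_gen_rcons.
case: s0 => [|c s2].
  move=> nb ng; case: ifP => _ //; case: ifP => _.
    by apply: contra ng; rewrite /beyond /a_src /a_sgn /a_path /= => /and3P [/eqP -> /eqP -> /eqP ->].
  by case: ifP => _ //; rewrite /beyond /= ?andbF.
case: s2 => [|c3 s5] nb ng; case: ifP => _ //; case: ifP => _; try case: ifP => _;
  by move: nb; rewrite /beyond /a_src /a_sgn /a_path /= ?andbF.
Qed.
End Grp.
Section FPR.
Variables (R : realType) (N : nat) (p : 'I_N -> 'I_N -> bool -> R).
Hypothesis hp0 : forall (i j : 'I_N) (k : bool), i != j -> 0 <= p i j k.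
Hypothesis hsum : forall i : 'I_N, \sum_(j : 'I_N | j != i) \sum_(k : bool) p i j k = 1.

Lemma step_prob_ge0 (x : arrow N) s : 0 <= step_prob p x s.
Proof. by rewrite /step_prob; case: ifP => // h; apply: hp0; rewrite eq_sym h. Qed.

Lemma step_sum (x : arrow N) : \sum_(s : 'I_N * bool) step_prob p x s = 1.
Proof.
have := hsum (a_tgt x); rewrite big_mkcond /= => <-.
rewrite (eq_bigr (fun j => \sum_(kk : bool) (if j != a_tgt x then p (a_tgt x) j kk else 0))); last first.
  by move=> j _; case: (j != a_tgt x) => //; rewrite big1_eq.
by rewrite pair_big /=; apply: eq_bigr => -[b kk] _.
Qed.

Lemma fpr_ge0 (x w : arrow N) n : 0 <= fpr p x w n.
Proof.
elim: n x => [|n IH] x /=; first by rewrite ler0n.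
by rewrite mulr_ge0 ?ler0n // sumr_ge0 // => s _; rewrite mulr_ge0 // step_prob_ge0.
Qed.

Lemma fpr_sum_le1 (w : arrow N) M (x : arrow N) : \sum_(0 <= n < M) fpr p x w n <= 1.
Proof.
elim: M x => [|M IH] x; first by rewrite big_geq.
rewrite big_nat_recl //=.
have [->|xw] := eqVneq x w.
  by rewrite ?eqxx big1 ?addr0 // => n _; rewrite /= ?eqxx mul0r.
rewrite /= add0r.
rewrite (eq_bigr (fun n => \sum_(s : 'I_N * bool) step_prob p x s * fpr p (mul_gen x s.1 s.2) w n)); last first.
  by move=> n _ /=; rewrite ?xw mul1r.
rewrite exchange_big /= -(step_sum x); apply: ler_sum => s _.
by rewrite -big_distrr /= -[leRHS]mulr1 ler_wpM2l ?step_prob_ge0.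
Qed.

Lemma fpr_lmul i l k (t : seq 'I_N) n (y : arrow N) : i != l -> t != [::] ->
  a_src y = l -> pn y ->
  fpr p (lmul i l k y) (i, k, l :: t) n = fpr p y (l, ~~k, t) n.
Proof.
move=> il tn; elim: n y => [|n IH] y sy py /=; first by rewrite lmul_eqW.
rewrite lmul_eqW //; congr (_ * _); apply: eq_bigr => s _.
rewrite /step_prob lmul_tgt // -lmul_mul // IH //; first by rewrite mul_gen_src.
exact: pn_mul.
Qed.

Lemma fpr_self (x : arrow N) a : fpr p x x a = (a == 0)%:R.
Proof. by case: a => [|a] /=; rewrite eqxx // mul0r. Qed.

Lemma fpr_conv i l k (t : seq 'I_N) n (y : arrow N) : i != l -> t != [::] ->
  ~~ beyond i l k y ->
  fpr p y (i, k, l :: t) n = \sum_(a < n.+1) fpr p y (i, k, [:: l]) a *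
     fpr p (unit_arrow l) (l, ~~k, t) (n - a).
Proof.
move=> il tn.
have bW : beyond i l k (i, k, l :: t) by case: t tn => // c t _; rewrite /beyond /= !eqxx.
have ulw : (unit_arrow l == (l, ~~k, t)) = false.
  by move: tn; case: (t) => // c t' _; rewrite /unit_arrow !xpair_eqE andbF.
have gW : forall m, fpr p (i, k, [:: l]) (i, k, l :: t) m = fpr p (unit_arrow l) (l, ~~k, t) m.
  by move=> m; rewrite -(@fpr_lmul i l k t m (unit_arrow l)).
elim: n y => [|n IH] y nb.
  have yW : (y == (i, k, l :: t)) = false.
    by apply/negbTE; apply: contraNneq nb => ->.
  by rewrite big_ord_recl big_ord0 addr0 /= yW ulw !mulr0.
have yW : (y != (i, k, l :: t)) by apply: contraNneq nb => ->.
have [->|yg] := eqVneq y (i, k, [:: l]).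
  rewrite gW big_ord_recl fpr_self eqxx mul1r subn0 big1 ?addr0 //.
  by move=> a _; rewrite fpr_self /= mul0r.
rewrite /= yW mul1r big_ord_recl /= (negbTE yg) mul0r add0r.
under [in RHS]eq_bigr do rewrite mul1r add0n big_distrl /=.
rewrite exchange_big /=; apply: eq_bigr => s _.
rewrite IH; last by apply: cut.
rewrite big_distrr /=; apply: eq_bigr => a _.
by rewrite subSS mulrA.
Qed.
End FPR.
Section Main.
Variables (R : realType) (N : nat) (p : 'I_N -> 'I_N -> bool -> R).
Hypothesis hp0 : forall (i j : 'I_N) (k : bool), i != j -> 0 <= p i j k.
Hypothesis hsum : forall i : 'I_N, \sum_(j : 'I_N | j != i) \sum_(k : bool) p i j k = 1.

Lemma Rgf_fpr (x w : arrow N) lam :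
  Rgf p x w lam = limn (fun M => \sum_(0 <= n < M) fpr p x w n * lam ^+ n).
Proof.
rewrite /Rgf (_ : (fun M => \sum_(0 <= n < M) first_passage p x w n * lam ^+ n) =
  (fun M => \sum_(0 <= n < M) fpr p x w n * lam ^+ n)) //; apply: funext => M.
by apply: eq_bigr => n _; rewrite fp_fpr.
Qed.

Lemma psum_lam_le1 (x w : arrow N) lam M : 0 <= lam <= 1 ->
  \sum_(0 <= n < M) fpr p x w n * lam ^+ n <= 1.
Proof.
case/andP=> l0 l1; apply: le_trans (fpr_sum_le1 hp0 hsum w M x).
apply: ler_sum => n _; apply: ler_piMr; first exact: fpr_ge0.
exact: exprn_ile1.
Qed.

Lemma Rgf_split (i l : 'I_N) k (t : seq 'I_N) lam : i != l -> t != [::] -> 0 <= lam <= 1 ->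
  Rgf p (unit_arrow i) (i, k, l :: t) lam =
  Rgf p (unit_arrow i) (i, k, [:: l]) lam * Rgf p (unit_arrow l) (l, ~~k, t) lam.
Proof.
move=> il tn hl; have /andP [l0 _] := hl; rewrite !Rgf_fpr.
apply: (@lim_conv R (fun n => fpr p (unit_arrow i) (i, k, [:: l]) n * lam ^+ n)
   (fun n => fpr p (unit_arrow l) (l, ~~k, t) n * lam ^+ n)
   (fun n => fpr p (unit_arrow i) (i, k, l :: t) n * lam ^+ n) 1).
- by move=> n; rewrite mulr_ge0 ?exprn_ge0 ?fpr_ge0.
- by move=> n; rewrite mulr_ge0 ?exprn_ge0 ?fpr_ge0.
- by move=> M; apply: psum_lam_le1.
- by move=> M; apply: psum_lam_le1.
move=> n /=; rewrite (fpr_conv p n il tn); last by rewrite /beyond /a_path /unit_arrow /= !andbF.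
rewrite big_distrl /=; apply: eq_bigr => a _.
by rewrite mulrACA -exprD subnKC // -ltnS.
Qed.
End Main.
Lemma foldr_S_gen (T : Type) (op : T -> T -> T) (e : T) (F : bool -> T) d kk :
  foldr (fun m acc => op (F (alt_sgn kk m)) acc) e (iota 1 d.+1) =
  op (F kk) (foldr (fun m acc => op (F (alt_sgn (~~ kk) m)) acc) e (iota 1 d)).
Proof.
rewrite [LHS]/=; congr (op _ _).
elim: d 1%N => [|d IH] m //=.
by rewrite alt_sgnS IH.
Qed.

Section Main2.
Variables (R : realType) (N : nat) (p : 'I_N -> 'I_N -> bool -> R).
Variable K : 'I_N -> 'I_N -> bool -> R.

Lemma Bbar_S d k lam z :
  Bbar p K d.+1 k lam z = Bmx p K k lam z *m Bbar p K d (~~k) lam z.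
Proof.
exact: (@foldr_S_gen _ mulmx _ (fun b => Bmx p K b lam z) d k).
Qed.
Lemma inF_cons (i j l : 'I_N) k d (t : seq 'I_N) : t != [::] ->
  inF i j k d.+1 (i, k, l :: t) = (i != l) && inF l j (~~k) d (l, ~~k, t).
Proof.
move=> tn; rewrite /inF /reduced /a_src /a_path /a_sgn /a_len /a_tgt /= !eqxx (negbTE tn) /=.
by rewrite !andbT; case: (i != l).
Qed.

Lemma metric_cons (i l : 'I_N) k (t : seq 'I_N) :
  a_metric K (i, k, l :: t) = K i l k + a_metric K (l, ~~k, t).
Proof.
rewrite /a_metric /a_len /a_path /a_src /a_sgn /= big_ord_recl /=; congr (_ + _).
apply: eq_bigr => m _ /=.
rewrite add0n /bump leq0n add1n alt_sgnS.
have hm : (m < size t)%N := ltn_ord m.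
rewrite (set_nth_default l i hm) (set_nth_default l i (_ : (m < size (l :: t))%N)) //=.
exact: ltnW.
Qed.
End Main2.
Lemma main_gen (R : realType) (N : nat) (p : 'I_N -> 'I_N -> bool -> R)
  (hp0 : forall (i j : 'I_N) (k : bool), i != j -> 0 <= p i j k)
  (hsum : forall i : 'I_N, \sum_(j : 'I_N | j != i) \sum_(k : bool) p i j k = 1)
  (K : 'I_N -> 'I_N -> bool -> R) (lam z : R) (hlam : 0 <= lam <= 1) (hz : 0 < z) (d : nat) :
  forall (k : bool) (i j : 'I_N), (1 <= d)%N ->
  Bbar p K d k lam z i j =
  \sum_(t : d.-tuple 'I_N | inF i j k d ((i, k, val t) : arrow N))
     z `^ (a_metric K ((i, k, val t) : arrow N))
     * Rgf p (unit_arrow i) ((i, k, val t) : arrow N) lam.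
Proof.
elim: d => [|d IH] // k i j _.
rewrite Bbar_S mxE [RHS]big_mkcond /= sum_tuple_cons; apply: eq_bigr => l _ /=.
have hB : Bmx p K k lam z i l = if i != l then z `^ K i l k * Rij p i l k lam else 0 by rewrite mxE.
rewrite hB.
case: d IH => [|d] IH.
  rewrite sum_tuple0 /=.
  have -> : Bbar p K 0 (~~k) lam z = 1%:M by [].
  rewrite mxE.
  have -> : inF i j k 1 (i, k, [:: l]) = (i != l) && (l == j).
    by rewrite /inF /reduced /a_src /a_path /a_sgn /a_len /a_tgt /= !eqxx /= !andbT.
  rewrite metric_cons /a_metric /= big_ord0 addr0.
  case: (i != l) => /=; last by rewrite mul0r.
  by case: (l == j) => /=; rewrite ?mulr1 ?mulr0.
rewrite IH // big_distrr /= big_mkcond /=; apply: eq_bigr => t _.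
have tn : val t != [::] by rewrite -size_eq0 size_tuple.
rewrite inF_cons //.
case: (i =P l) => [<-|/eqP il] /=; first by rewrite mul0r; case: ifP.
case: ifP => _ //.
rewrite metric_cons powRD; last by rewrite (gt_eqF hz) implybT.
rewrite (Rgf_split hp0 hsum k il tn hlam).
by rewrite /Rij mulrACA.
Qed.

Unset Implicit Arguments.

Theorem lemma6p3 (R : realType) (N : nat) (hN : (3 <= N)%N)
  (p : 'I_N -> 'I_N -> bool -> R)
  (hp : forall (i j : 'I_N) (k : bool), i != j -> 0 < p i j k < 1)
  (hsum : forall i : 'I_N, \sum_(j : 'I_N | j != i) \sum_(k : bool) p i j k = 1)
  (K : 'I_N -> 'I_N -> bool -> R)
  (hK : forall (i j : 'I_N) (k : bool), i != j -> 0 <= K i j k)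
  (d : nat) (hd : (1 <= d)%N) (k : bool) (i j : 'I_N) (lam z : R)
  (hlam : 0 <= lam <= 1) (hz : 0 < z <= 1) :
  Bbar p K d k lam z i j =
  \sum_(t : d.-tuple 'I_N | inF i j k d ((i, k, val t) : arrow N))
     z `^ (a_metric K ((i, k, val t) : arrow N))
     * Rgf p (unit_arrow i) ((i, k, val t) : arrow N) lam.
Proof.
have hp0 : forall (a b : 'I_N) (c : bool), a != b -> 0 <= p a b c.
  by move=> a b c h; have /andP [h1 _] := hp a b c h; exact: ltW.
have hz0 : 0 < z by case/andP: hz.
exact: (@main_gen R N p hp0 hsum K lam z hlam hz0 d k i j hd).
Qed.
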